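(* Let $d$ be a square-free positive integer and $N=U^{\oplus2}\oplus E_8^{\oplus2}\oplus\langle-2\rangle\oplus\langle-2d\rangle$, and let $I_2(N)$ be the set of primitive isotropic rank-two sublattices of $N$. The natural map $I_2(N)/O^+(N)\to I_2(N)/O(N)$ is a bijection.
   Context: $O^+(N)$ is the index-two subgroup of $O(N)$ of isometries of real spinor norm $1$ (the real spinor norm of a product of reflections $\rho_{v_1}\cdots\rho_{v_m}$, $v_i\in N_{\mathbb R}$, is $\prod(-v_i^2/2)$ modulo squares). *)

(* Defs.v *)
From HB Require Import structures.
From mathcomp Require Import all_boot all_order all_algebra.
From mathcomp Require Import reals.
Set Implicit Arguments. Unset Strict Implicit. Unset Printing Implicit Defensive.
Import Order.TTheory GRing.Theory Num.Theory.
Local Open Scope ring_scope.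

Definition squarefree (d : nat) : Prop :=
  forall p : nat, prime p -> ~~ (p * p %| d)%N.

(* Gram matrix of E_8 (negative definite, i.e. E_8(-1)), indices 0..7:
   Dynkin chain 0-1-2-3-4-5-6 and node 7 attached to node 4. *)
Definition e8_adj (i j : nat) : bool :=
  [|| ((i.+1 == j) || (j.+1 == i)) && (i < 7)%N && (j < 7)%N,
      (i == 4%N) && (j == 7%N) | (i == 7%N) && (j == 4%N)].

Definition e8_entry (i j : nat) : int :=
  if i == j then (-2)%R else if e8_adj i j then 1%R else 0%R.

(* Gram matrix entries of N = U^2 + E_8^2 + <-2> + <-2d>, rank 22,
   in the basis: 0..3 (U+U), 4..11 (E_8), 12..19 (E_8), 20 (<-2>), 21 (<-2d>). *)
Definition gramN_entry (d : nat) (i j : nat) : int :=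
  if (i < 4)%N && (j < 4)%N then
    (if (i./2 == j./2) && (i != j) then 1%R else 0%R)
  else if [&& (4 <= i)%N, (i < 12)%N, (4 <= j)%N & (j < 12)%N] then
    e8_entry (i - 4) (j - 4)
  else if [&& (12 <= i)%N, (i < 20)%N, (12 <= j)%N & (j < 20)%N] then
    e8_entry (i - 12) (j - 12)
  else if (i == 20%N) && (j == 20%N) then (-2)%R
  else if (i == 21%N) && (j == 21%N) then (- (2 * d)%:Z)%R
  else 0%R.

Definition gramN (d : nat) : 'M[int]_22 :=
  \matrix_(i < 22, j < 22) gramN_entry d i j.

Definition vecN := 'cV[int]_22.

Definition bN (d : nat) (x y : vecN) : int := ((x^T *m gramN d *m y) 0 0).

Definition isom_N (d : nat) (g : 'M[int]_22) : Prop :=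
  g \in unitmx /\ g^T *m gramN d *m g = gramN d.

Definition gramR (R : realType) (d : nat) : 'M[R]_22 := map_mx intr (gramN d).
Definition qR (R : realType) (d : nat) (v : 'cV[R]_22) : R :=
  (v^T *m gramR R d *m v) 0 0.

(* reflection rho_v (x) = x - 2 (x,v)/(v,v) v, as a matrix acting on columns *)
Definition reflR (R : realType) (d : nat) (v : 'cV[R]_22) : 'M[R]_22 :=
  1%:M - (2 / qR d v) *: (v *m (v^T *m gramR R d)).

(* real spinor norm 1: g is a product of reflections rho_{v_1} ... rho_{v_m}
   (v_i anisotropic in N_R) with prod (- v_i^2 / 2) a positive real, i.e. a
   square in R^*.  (Spinor norm is well defined, so existence of one such
   decomposition is equivalent to spinor norm 1.) *)
Definition spinor_norm_one (R : realType) (d : nat) (g : 'M[R]_22) : Prop :=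
  exists s : seq 'cV[R]_22,
    [/\ all (fun v => qR d v != 0) s,
        g = \prod_(v <- s) reflR d v
      & 0 < \prod_(v <- s) (- qR d v / 2)].

Definition isom_plus_N (R : realType) (d : nat) (g : 'M[int]_22) : Prop :=
  isom_N d g /\ spinor_norm_one d (map_mx intr g : 'M[R]_22).

(* sublattices are represented by their sets of vectors *)
Definition span2 (u v : vecN) : vecN -> Prop :=
  fun x => exists a b : int, x = a *: u + b *: v.

Definition prim_iso_rank2 (d : nat) (L : vecN -> Prop) : Prop :=
  [/\ (exists u v : vecN,
         (forall a b : int, a *: u + b *: v = 0 -> a = 0 /\ b = 0) /\
         (forall x, L x <-> span2 u v x)),
      (forall (k : int) (x : vecN), k != 0 -> L (k *: x) -> L x)
    & (forall x y, L x -> L y -> bN d x y = 0)].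

Definition maps_to (g : 'M[int]_22) (L L' : vecN -> Prop) : Prop :=
  forall y, L' y <-> exists x, L x /\ y = g *m x.

(* Main.v *)
Require Import Defs.
From HB Require Import structures.
From mathcomp Require Import all_boot all_order all_algebra.
From mathcomp Require Import reals.
From mathcomp Require Import ring.
Set Implicit Arguments. Unset Strict Implicit. Unset Printing Implicit Defensive.
Import Order.TTheory GRing.Theory Num.Theory.
Local Open Scope ring_scope.

Definition bform (d : nat) (a b : nat -> int) : int :=
  a 0 * b 1
  + a 1 * b 0
  + a 2 * b 3
  + a 3 * b 2
  + (-2) * a 4 * b 4
  + (-2) * a 5 * b 5
  + (-2) * a 6 * b 6
  + (-2) * a 7 * b 7
  + (-2) * a 8 * b 8
  + (-2) * a 9 * b 9
  + (-2) * a 10 * b 10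
  + (-2) * a 11 * b 11
  + a 4 * b 5
  + a 5 * b 4
  + a 5 * b 6
  + a 6 * b 5
  + a 6 * b 7
  + a 7 * b 6
  + a 7 * b 8
  + a 8 * b 7
  + a 8 * b 9
  + a 9 * b 8
  + a 9 * b 10
  + a 10 * b 9
  + a 8 * b 11
  + a 11 * b 8
  + (-2) * a 12 * b 12
  + (-2) * a 13 * b 13
  + (-2) * a 14 * b 14
  + (-2) * a 15 * b 15
  + (-2) * a 16 * b 16
  + (-2) * a 17 * b 17
  + (-2) * a 18 * b 18
  + (-2) * a 19 * b 19
  + a 12 * b 13
  + a 13 * b 12
  + a 13 * b 14
  + a 14 * b 13
  + a 14 * b 15
  + a 15 * b 14
  + a 15 * b 16
  + a 16 * b 15
  + a 16 * b 17
  + a 17 * b 16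
  + a 17 * b 18
  + a 18 * b 17
  + a 16 * b 19
  + a 19 * b 16
  + (-2) * a 20 * b 20
  + (- (2 * d)%:Z) * a 21 * b 21.
Definition bhalf (d : nat) (a : nat -> int) : int :=
  a 0 * a 1
  + a 2 * a 3
  + - a 4 * a 4
  + - a 5 * a 5
  + - a 6 * a 6
  + - a 7 * a 7
  + - a 8 * a 8
  + - a 9 * a 9
  + - a 10 * a 10
  + - a 11 * a 11
  + a 4 * a 5
  + a 5 * a 6
  + a 6 * a 7
  + a 7 * a 8
  + a 8 * a 9
  + a 9 * a 10
  + a 8 * a 11
  + - a 12 * a 12
  + - a 13 * a 13
  + - a 14 * a 14
  + - a 15 * a 15
  + - a 16 * a 16
  + - a 17 * a 17
  + - a 18 * a 18
  + - a 19 * a 19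
  + a 12 * a 13
  + a 13 * a 14
  + a 14 * a 15
  + a 15 * a 16
  + a 16 * a 17
  + a 17 * a 18
  + a 16 * a 19
  + - a 20 * a 20
  + - d%:Z * a 21 * a 21.

Definition xc (x : vecN) (i : nat) : int := x (inord i) 0.

Lemma sum22 (F : 'I_22 -> int) : \sum_(i<22) F i = \sum_(0 <= i < 22) F (inord i).
Proof. by rewrite big_mkord; apply: eq_bigr => i _; rewrite inord_val. Qed.

Lemma bN_sum d x y : bN d x y = \sum_(i<22) \sum_(j<22) x i 0 * gramN_entry d i j * y j 0.
Proof.
rewrite /bN !mxE; under eq_bigr do rewrite !mxE big_distrl /=.
rewrite exchange_big /=; apply: eq_bigr => i _; apply: eq_bigr => j _.
by rewrite !mxE.
Qed.

Lemma bN_formula d x y : bN d x y = bform d (xc x) (xc y).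
Proof.
rewrite bN_sum sum22; under eq_bigr do rewrite sum22.
rewrite unlock /=.
rewrite !inordK //.
rewrite /bform /xc /gramN_entry /e8_entry /e8_adj /=.
ring.
Qed.

Lemma bformC d a b : bform d a b = bform d b a.
Proof. rewrite /bform; ring. Qed.

Lemma bform_even d a : bform d a a = 2 * bhalf d a.
Proof. rewrite /bform /bhalf; ring. Qed.

Lemma bform_ext d a a' b b' : (forall k, (k < 22)%N -> a k = a' k) ->
  (forall k, (k < 22)%N -> b k = b' k) -> bform d a b = bform d a' b'.
Proof. by move=> ha hb; rewrite /bform !ha // !hb. Qed.

Definition e8roots : seq (seq int) :=
  [:: [:: 0; 0; 0; 0; 0; 0; 0; 1]; [:: 0; 0; 0; 0; 0; 0; 1; 0];
      [:: 0; 0; 0; 1; 0; 0; 0; 0]; [:: 0; 0; 0; 1; 2; 2; 1; 1];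
      [:: 0; 1; 0; 0; 0; 0; 0; 0]; [:: 0; 1; 2; 2; 2; 2; 1; 1];
      [:: 0; 1; 2; 3; 4; 2; 1; 2]; [:: 2; 3; 4; 5; 6; 4; 2; 3]].

Definition fz (i k : nat) : int :=
  if (i < 4)%N then
    (if k == (i./2).*2 then 1 else if k == ((i./2).*2).+1 then (if odd i then -1 else 1) else 0)
  else if (i < 12)%N then
    (if (4 <= k)%N && (k < 12)%N then nth 0 (nth [::] e8roots (i - 4)) (k - 4) else 0)
  else if (i < 20)%N then
    (if (12 <= k)%N && (k < 20)%N then nth 0 (nth [::] e8roots (i - 12)) (k - 12) else 0)
  else if i == k then 1 else 0.

Lemma orth_check : all (fun i => all (fun j => (i == j) || (bform 0 (fz i) (fz j) == 0)) (iota 0 22)) (iota 0 22).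
Proof. vm_compute. reflexivity. Qed.
Lemma norm_check : all (fun i => bform 0 (fz i) (fz i) != 0) (iota 0 21).
Proof. vm_compute. reflexivity. Qed.
Lemma bform_d d a b : bform d a b = bform 0 a b - (2 * d)%:Z * a 21 * b 21.
Proof. rewrite /bform /=. ring. Qed.


Section Gen1.
Variable (F : comNzRingType) (n : nat) (G : 'M[F]_n).
Hypothesis symG : G^T = G.

Definition bil (x y : 'cV[F]_n) : F := (x^T *m G *m y) 0 0.
Definition Pm (v : 'cV[F]_n) : 'M[F]_n := v *m (v^T *m G).

Lemma bil_mx x y : x^T *m G *m y = (bil x y)%:M.
Proof. exact: mx11_scalar. Qed.

Lemma bilC x y : bil x y = bil y x.
Proof.
rewrite /bil; have -> : (x^T *m G *m y) 0 0 = ((x^T *m G *m y)^T) 0 0 by rewrite [in RHS]mxE.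
by rewrite !trmx_mul trmxK symG mulmxA.
Qed.

Lemma bilDl x1 x2 y : bil (x1 + x2) y = bil x1 y + bil x2 y.
Proof. by rewrite /bil raddfD /= !mulmxDl mxE. Qed.
Lemma bilZl a x y : bil (a *: x) y = a * bil x y.
Proof. by rewrite /bil linearZ /= -!scalemxAl mxE. Qed.
Lemma bilNl x y : bil (- x) y = - bil x y.
Proof. by rewrite -scaleN1r bilZl mulN1r. Qed.
Lemma bilBl x1 x2 y : bil (x1 - x2) y = bil x1 y - bil x2 y.
Proof. by rewrite bilDl bilNl. Qed.
Lemma bilDr x y1 y2 : bil x (y1 + y2) = bil x y1 + bil x y2.
Proof. by rewrite bilC bilDl !(bilC _ x). Qed.
Lemma bilZr a x y : bil x (a *: y) = a * bil x y.
Proof. by rewrite bilC bilZl bilC. Qed.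
Lemma bilNr x y : bil x (- y) = - bil x y.
Proof. by rewrite bilC bilNl bilC. Qed.
Lemma bilBr x y1 y2 : bil x (y1 - y2) = bil x y1 - bil x y2.
Proof. by rewrite bilDr bilNr. Qed.

Lemma Pm_apply v z : Pm v *m z = bil v z *: v.
Proof. by rewrite /Pm -mulmxA bil_mx mul_mx_scalar. Qed.

Lemma PmPm v : Pm v *m Pm v = bil v v *: Pm v.
Proof.
have -> : Pm v *m Pm v = Pm v *m v *m (v^T *m G) by rewrite -mulmxA.
by rewrite Pm_apply -scalemxAl.
Qed.

Lemma PmT v : (Pm v)^T *m G = G *m Pm v.
Proof. by rewrite /Pm !trmx_mul trmxK symG /Pm !mulmxA. Qed.

Definition reflE (e : F) v := 1%:M - e *: Pm v.

Lemma reflE_sq e v : reflE e v *m reflE e v = 1%:M - (e * (2 - e * bil v v)) *: Pm v.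
Proof.
rewrite /reflE mulmxBl mulmxBr !mul1mx mulmxBr mulmx1 -scalemxAl -scalemxAr PmPm.
set P := Pm v; apply/matrixP=> i j; rewrite !mxE; ring.
Qed.

Lemma reflE_inv e v : e * bil v v = 2 -> reflE e v *m reflE e v = 1%:M.
Proof. by move=> h; rewrite reflE_sq h subrr mulr0 scale0r subr0. Qed.

Lemma reflE_iso e v : e * bil v v = 2 -> (reflE e v)^T *m G *m reflE e v = G.
Proof.
move=> h; rewrite /reflE.
have -> : (1%:M - e *: Pm v)^T = 1%:M - e *: (Pm v)^T.
  by apply/matrixP=> i j; rewrite !mxE eq_sym.
rewrite mulmxBl mul1mx -scalemxAl PmT.
rewrite mulmxBl mulmxBr mulmx1 -!scalemxAl -!scalemxAr mulmxBr mulmx1 -scalemxAr -mulmxA PmPm -scalemxAr.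
set GP := G *m Pm v; clearbody GP.
apply/matrixP=> i j; rewrite !mxE; apply/eqP; rewrite -subr_eq0; apply/eqP.
transitivity (GP i j * e * (e * bil v v - 2)); first ring.
by rewrite h subrr mulr0.
Qed.

Lemma reflE_fix e v z : bil z v = 0 -> reflE e v *m z = z.
Proof. by move=> h; rewrite /reflE mulmxBl mul1mx -scalemxAl Pm_apply bilC h scale0r scaler0 subr0. Qed.

Lemma reflE_apply e v z : reflE e v *m z = z - (e * bil v z) *: v.
Proof. by rewrite /reflE mulmxBl mul1mx -scalemxAl Pm_apply scalerA. Qed.

Definition iso (g : 'M[F]_n) := g^T *m G *m g = G.

Lemma iso_mul g1 g2 : iso g1 -> iso g2 -> iso (g1 *m g2).
Proof.
rewrite /iso => h1 h2; rewrite trmx_mul -!mulmxA (mulmxA g1^T) (mulmxA (g1^T *m G)) h1.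
by rewrite mulmxA.
Qed.

Lemma iso_bil g x y : iso g -> bil (g *m x) (g *m y) = bil x y.
Proof. by rewrite /iso /bil trmx_mul => h; rewrite -!mulmxA (mulmxA g^T) (mulmxA (g^T *m G)) h !mulmxA. Qed.

End Gen1.

Section Generic.
Variable (F : numFieldType) (n : nat) (G : 'M[F]_n).
Hypothesis symG : G^T = G.
Local Notation bil := (bil G).
Local Notation Pm := (Pm G).
Local Notation reflE := (reflE G).
Local Notation iso := (iso G).
Definition refl (v : 'cV[F]_n) : 'M[F]_n := 1%:M - (2 / bil v v) *: Pm v.

Lemma refl_map a b : bil a a = bil b b -> bil (a - b) (a - b) != 0 ->
  refl (a - b) *m a = b.
Proof.
move=> hab hq; rewrite /refl -/(reflE _ _) /reflE mulmxBl mul1mx -scalemxAl Pm_apply scalerA.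
have -> : 2 / bil (a - b) (a - b) * bil (a - b) a = 1.
  move: hq; rewrite !bilBl !(bilBr symG) ((bilC symG) b a) hab => hq.
  by field.
by rewrite scale1r opprB addrC subrK.
Qed.


Lemma refl_reflE v : bil v v != 0 -> (2 / bil v v) * bil v v = 2.
Proof. by move=> h; rewrite mulfVK. Qed.

Variable b : 'I_n -> 'cV[F]_n.
Hypothesis borth : forall i j, i != j -> bil (b i) (b j) = 0.
Hypothesis bnorm : forall i, bil (b i) (b i) != 0.

Lemma fix_all_id g : (forall j, g *m b j = b j) -> g = 1%:M.
Proof.
move=> hg; pose B := \matrix_(i, j) b j i 0.
have colB j : col j B = b j by apply/matrixP=> i k; rewrite !mxE (ord1 k).
have gB : g *m B = B.
  by apply/trmx_inj/row_matrixP => j; rewrite -!tr_col !colEsub -mulmx_colsub -!colEsub colB hg.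
have hBB i j : (B^T *m G *m B) i j = bil (b i) (b j).
  rewrite /bil -!colB !mxE; apply: eq_bigr => k _; rewrite !mxE; congr (_ * _).
  by apply: eq_bigr => l _; rewrite !mxE.
have D : B^T *m G *m B = diag_mx (\row_i bil (b i) (b i)).
  apply/matrixP=> i j; rewrite hBB !mxE; case: eqVneq => [->|/borth]; by rewrite ?mulr1n ?mulr0n.
have uB : B \in unitmx.
  rewrite unitmxE unitfE; apply/negP=> /eqP dB.
  have : \det (B^T *m G *m B) = 0 by rewrite !det_mulmx dB mulr0.
  move/eqP; apply/negP; rewrite D det_diag; apply/prodf_neq0 => i _; by rewrite mxE bnorm.
by rewrite -[g](mulmxK uB) gB mulmxV.
Qed.

Lemma CD_aux k : (k <= n)%N -> forall g, iso g ->
  (forall j : 'I_n, (k <= j)%N -> g *m b j = b j) ->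
  exists s : seq 'cV[F]_n, all (fun v => bil v v != 0) s /\ g = \prod_(v <- s) refl v.
Proof.
elim: k => [_ g _ hg|k IH hk g ig hg].
  by exists [::]; split => //; rewrite big_nil (fix_all_id (fun j => hg j (leq0n _))) idmxE.
pose kk := Ordinal hk; pose x := b kk; pose gx := g *m x.
have ortho (j : 'I_n) : (k < j)%N -> bil x (b j) = 0 /\ bil gx (b j) = 0.
  move=> hj; have nj : kk != j by rewrite -val_eqE /= neq_ltn hj.
  split; first exact: borth.
  by rewrite /gx -(hg j) ?iso_bil ?borth // ltnW.
have qgx : bil gx gx = bil x x by rewrite iso_bil.
have hx := bnorm kk.
case: (eqVneq (bil (gx - x) (gx - x)) 0) => hq.
- have hq2 : bil (gx + x) (gx + x) != 0.
    move: hq; rewrite !bilBl !(bilBr symG) !bilDl !(bilDr symG) qgx ((bilC symG) x gx) => hq.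
    have -> : bil x x + bil gx x + (bil gx x + bil x x) = 
       bil x x *+ 4 - (bil x x - bil gx x - (bil gx x - bil x x)) by rewrite mulrS; ring.
    by rewrite hq subr0 mulrn_eq0 negb_or hx.
  pose r1 := refl (gx + x); pose r2 := refl x.
  have r1gx : r1 *m gx = - x.
    have := @refl_map gx (- x); rewrite opprK; apply => //.
    by rewrite bilNl (bilNr symG) opprK.
  have r2x : r2 *m (- x) = x.
    rewrite mulmxN /r2 /refl mulmxBl mul1mx -scalemxAl Pm_apply scalerA mulfVK //.
    by rewrite scaler_nat mulr2n opprB addrK.
  pose g' := r2 *m (r1 *m g).
  have ig' : iso g'.
    by apply: iso_mul; [|apply: iso_mul] => //; apply: (reflE_iso symG); apply: refl_reflE.
  have [|s [hs1 hs2]] := IH (ltnW hk) g' ig'.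
    move=> j; rewrite leq_eqVlt => /orP[/eqP ej|kj].
      have -> : j = kk by apply: val_inj.
      by rewrite /g' -!mulmxA -/x -/gx r1gx r2x.
    have [o1 o2] := ortho j kj.
    rewrite /g' -!mulmxA hg //.
    rewrite (@reflE_fix _ _ _ symG _ _ (b j)) ?(@reflE_fix _ _ _ symG _ _ (b j)) //.
      by rewrite (bilC symG).
    by rewrite (bilDr symG) !((bilC symG) (b j)) o1 o2 addr0.
  exists [:: gx + x, x & s]; split; first by rewrite /= hq2 hx.
  rewrite !big_cons -hs2; change (g = r1 *m (r2 *m (r2 *m (r1 *m g)))).
  have i1 : r1 *m r1 = 1%:M by apply: reflE_inv; apply: refl_reflE.
  have i2 : r2 *m r2 = 1%:M by apply: reflE_inv; apply: refl_reflE.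
  by rewrite (mulmxA r2 r2) i2 mul1mx (mulmxA r1 r1) i1 mul1mx.
- pose r := refl (gx - x).
  have rgx : r *m gx = x by apply: refl_map.
  pose g' := r *m g.
  have ig' : iso g' by apply: iso_mul => //; apply: (reflE_iso symG); apply: refl_reflE.
  have [|s [hs1 hs2]] := IH (ltnW hk) g' ig'.
    move=> j; rewrite leq_eqVlt => /orP[/eqP ej|kj].
      have -> : j = kk by apply: val_inj.
      by rewrite /g' -!mulmxA -/x -/gx rgx.
    have [o1 o2] := ortho j kj.
    rewrite /g' -!mulmxA hg // (@reflE_fix _ _ _ symG _ _ (b j)) //.
    by rewrite (bilBr symG) !((bilC symG) (b j)) o1 o2 subr0.
  exists (gx - x :: s); split; first by rewrite /= hq.
  rewrite big_cons -hs2; change (g = r *m (r *m g)).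
  have i1 : r *m r = 1%:M by apply: reflE_inv; apply: refl_reflE.
  by rewrite mulmxA i1 mul1mx.
Qed.

Theorem CD g : iso g ->
  exists s : seq 'cV[F]_n, all (fun v => bil v v != 0) s /\ g = \prod_(v <- s) refl v.
Proof.
move=> ig; apply: (@CD_aux n (leqnn n) g ig) => j; by rewrite leqNgt ltn_ord.
Qed.


End Generic.



Definition e8inv : seq (seq int) := [:: [:: -2; -3; -4; -5; -6; -4; -2; -3]; [:: -3; -6; -8; -10; -12; -8; -4; -6]; [:: -4; -8; -12; -15; -18; -12; -6; -9]; [:: -5; -10; -15; -20; -24; -16; -8; -12]; [:: -6; -12; -18; -24; -30; -20; -10; -15]; [:: -4; -8; -12; -16; -20; -14; -7; -10]; [:: -2; -4; -6; -8; -10; -7; -4; -5]; [:: -3; -6; -9; -12; -15; -10; -5; -8]].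

Definition fw (k j : nat) : int :=
  if (k < 4)%N then (if j == (if odd k then k.-1 else k.+1) then 1 else 0)
  else if (k < 12)%N then
    (if (4 <= j)%N && (j < 12)%N then nth 0 (nth [::] e8inv (j - 4)) (k - 4) else 0)
  else if (12 <= j)%N && (j < 20)%N then nth 0 (nth [::] e8inv (j - 12)) (k - 12) else 0.

Lemma fw_dual d a k : (k < 20)%N -> bform d a (fw k) = a k.
Proof.
move=> hk.
do 20 (case: k hk => [|k] hk; first by rewrite /bform /fw /=; ring).
by [].
Qed.

Definition ext20 (f : nat -> int) (k : nat) : int := if (k < 20)%N then f k else 0.

Lemma det_identity (p : int) d a b ma mb :
  (forall k, (k < 20)%N -> a k = p * ma k) ->
  (forall k, (k < 20)%N -> b k = p * mb k) ->
  (a 20 * b 21 - a 21 * b 20) ^+ 2 =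
    b 21 ^+ 2 * (p ^+ 2 * bhalf d (ext20 ma) - bhalf d a)
  + a 21 ^+ 2 * (p ^+ 2 * bhalf d (ext20 mb) - bhalf d b)
  - a 21 * b 21 * (p ^+ 2 * bform d (ext20 ma) (ext20 mb) - bform d a b).
Proof.
move=> ha hb; rewrite /bhalf /bform /ext20 /=.
rewrite (ha 0) // (ha 1) // (ha 2) // (ha 3) // (ha 4) // (ha 5) // (ha 6) // (ha 7) // (ha 8) // (ha 9) // (ha 10) // (ha 11) // (ha 12) // (ha 13) // (ha 14) // (ha 15) // (ha 16) // (ha 17) // (ha 18) // (ha 19) //.
rewrite (hb 0) // (hb 1) // (hb 2) // (hb 3) // (hb 4) // (hb 5) // (hb 6) // (hb 7) // (hb 8) // (hb 9) // (hb 10) // (hb 11) // (hb 12) // (hb 13) // (hb 14) // (hb 15) // (hb 16) // (hb 17) // (hb 18) // (hb 19) //.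
ring.
Qed.

Lemma dvdz_sq_prime (p : nat) x : prime p -> (p %| x ^+ 2)%Z -> (p %| x)%Z.
Proof.
move=> pp; rewrite !dvdzE expr2 abszM /= Euclid_dvdM //.
by case/orP.
Qed.

Lemma core_det (p : nat) d a b : prime p ->
  (forall k, (k < 20)%N -> (p %| a k)%Z) -> (forall k, (k < 20)%N -> (p %| b k)%Z) ->
  bform d a a = 0 -> bform d b b = 0 -> bform d a b = 0 ->
  (p %| a 20%N * b 21%N - a 21%N * b 20%N)%Z.
Proof.
move=> pp pa pb haa hbb hab.
have ha k : (k < 20)%N -> a k = p%:Z * (a k %/ p)%Z by move=> hk; rewrite mulrC divzK // pa.
have hb k : (k < 20)%N -> b k = p%:Z * (b k %/ p)%Z by move=> hk; rewrite mulrC divzK // pb.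
have E := det_identity d ha hb.
have ha0 : bhalf d a = 0.
  by move: haa; rewrite bform_even => /eqP; rewrite mulf_eq0 /= => /eqP.
have hb0 : bhalf d b = 0.
  by move: hbb; rewrite bform_even => /eqP; rewrite mulf_eq0 /= => /eqP.
apply: (dvdz_sq_prime pp); rewrite E ha0 hb0 hab !subr0.
have pp2 (X : int) : (p %| p%:Z ^+ 2 * X)%Z by apply: dvdz_mulr; rewrite expr2 dvdz_mulr.
by apply: rpredB; [apply: rpredD|]; apply: dvdz_mull; apply: pp2.
Qed.

Lemma pick_xy (p : nat) A B C E : prime p -> (p %| A * E - B * C)%Z ->
  exists x y : int, ~~ ((p %| x)%Z && (p %| y)%Z) /\
    (p %| x * A + y * C)%Z /\ (p %| x * B + y * E)%Z.
Proof.
move=> pp hd.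
have np1 : ~~ (p %| 1)%Z by rewrite dvdz1 /=; case: eqP pp => // ->.
case hEB: ((p %| E)%Z && (p %| B)%Z).
  case hCA: ((p %| C)%Z && (p %| A)%Z).
    exists 1, 0; split; first by rewrite (negbTE np1).
    move/andP: hCA => [_ hA]; move/andP: hEB => [_ hB].
    by rewrite !mul1r !mul0r !addr0.
  exists C, (- A); split; first by rewrite rpredN hCA.
  split; first by have -> : C * A + - A * C = 0 by ring.
  have -> : C * B + - A * E = - (A * E - B * C) by ring.
  by rewrite rpredN.
exists E, (- B); split; first by rewrite rpredN hEB.
split; first by have -> : E * A + - B * C = A * E - B * C by ring.
by have -> : E * B + - B * E = 0 by ring.
Qed.

Lemma xc_col (f : nat -> int) k : (k < 22)%N -> xc (\col_(j < 22) f j) k = f k.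
Proof. by move=> hk; rewrite /xc mxE inordK. Qed.

Lemma xc_lin x y (u1 u2 : vecN) k : xc (x *: u1 + y *: u2) k = x * xc u1 k + y * xc u2 k.
Proof. by rewrite /xc !mxE. Qed.

Lemma dual_coord d (u : vecN) k : (k < 20)%N -> bN d u (\col_(j < 22) fw k j) = xc u k.
Proof.
move=> hk; rewrite bN_formula (@bform_ext d (xc u) (xc u) _ (fw k)) ?fw_dual //.
by move=> j hj; rewrite xc_col.
Qed.

Lemma no_common_prime d (L : vecN -> Prop) u1 u2 (p : nat) :
  (forall a b : int, a *: u1 + b *: u2 = 0 -> a = 0 /\ b = 0) ->
  (forall x, L x <-> span2 u1 u2 x) ->
  (forall (k : int) (x : vecN), k != 0 -> L (k *: x) -> L x) ->
  (forall x y, L x -> L y -> bN d x y = 0) ->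
  prime p -> (forall z, (p %| bN d u1 z)%Z) -> (forall z, (p %| bN d u2 z)%Z) -> False.
Proof.
move=> hind hspan hprim hiso pp h1 h2.
have c1 k : (k < 20)%N -> (p %| xc u1 k)%Z by move=> hk; rewrite -(dual_coord d).
have c2 k : (k < 20)%N -> (p %| xc u2 k)%Z by move=> hk; rewrite -(dual_coord d).
have Lu1 : L u1 by apply/hspan; exists 1, 0; rewrite scale1r scale0r addr0.
have Lu2 : L u2 by apply/hspan; exists 0, 1; rewrite scale1r scale0r add0r.
have i11 : bform d (xc u1) (xc u1) = 0 by rewrite -bN_formula hiso.
have i22 : bform d (xc u2) (xc u2) = 0 by rewrite -bN_formula hiso.
have i12 : bform d (xc u1) (xc u2) = 0 by rewrite -bN_formula hiso.
have hdet := core_det pp c1 c2 i11 i22 i12.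
have [x [y [nxy [hA hB]]]] := pick_xy pp hdet.
pose z := x *: u1 + y *: u2.
have hz (i : 'I_22) : (p %| z i ord0)%Z.
  rewrite -(inord_val i) -/(xc z i) xc_lin.
  have := ltn_ord i; rewrite ltnS leq_eqVlt => /orP[/eqP->//|].
  rewrite ltnS leq_eqVlt => /orP[/eqP->//|hi].
  by apply: rpredD; apply: dvdz_mull; [apply: c1|apply: c2].
pose z' : vecN := \col_i (z i ord0 %/ p)%Z.
have zz : z = p%:Z *: z'.
  apply/colP => i; rewrite [RHS]mxE [X in _ * X]mxE mulrC divzK //.
have Lz : L z by apply/hspan; exists x, y.
have pn0 : p%:Z != 0 by rewrite (eqz_nat p 0) -lt0n prime_gt0.
have Lz' : L z' by apply: (hprim p%:Z) => //; rewrite -zz.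
have [al [be hz']] := (hspan z').1 Lz'.
have : (x - p%:Z * al) *: u1 + (y - p%:Z * be) *: u2 = 0.
  apply/colP => i; move/colP/(_ i): zz; rewrite hz' /z !mxE => E.
  transitivity ((x * u1 i 0 + y * u2 i 0) - p%:Z * (al * u1 i 0 + be * u2 i 0)); first by ring.
  by rewrite E subrr.
move/hind => [/eqP ex /eqP ey].
move: nxy; rewrite subr_eq0 in ex; rewrite subr_eq0 in ey.
by rewrite (eqP ex) (eqP ey) !dvdz_mulr.
Qed.

Lemma dvd_mx_l (c : int) m n p (A : 'M[int]_(m, n)) (B : 'M[int]_(n, p)) :
  (forall i j, (c %| A i j)%Z) -> forall i j, (c %| (A *m B) i j)%Z.
Proof. by move=> h i j; rewrite mxE; apply: rpred_sum => k _; apply: dvdz_mulr. Qed.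

Lemma dvd_mx_r (c : int) m n p (A : 'M[int]_(m, n)) (B : 'M[int]_(n, p)) :
  (forall i j, (c %| B i j)%Z) -> forall i j, (c %| (A *m B) i j)%Z.
Proof. by move=> h i j; rewrite mxE; apply: rpred_sum => k _; apply: dvdz_mull. Qed.

Lemma entry_bN d (U : 'M[int]_(22, 2)) (z : vecN) (i : 'I_2) :
  (U^T *m gramN d *m z) i 0 = bN d (col i U) z.
Proof.
have E (A : 'M[int]_(2, 1)) : A i 0 = (row i A) 0 0 by rewrite !mxE.
by rewrite E !row_mul -tr_col.
Qed.

Lemma sorted_dvd01 (s : seq int) : sorted dvdz s -> (s`_0 %| s`_1)%Z.
Proof. by case: s => [|x [|y t]] //= /andP[]. Qed.

Lemma exists_unimod d (L : vecN -> Prop) : prim_iso_rank2 d L ->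
  exists u w : vecN, L u /\ bN d u w = 1.
Proof.
case=> [[u1 [u2 [hind hspan]]] hprim hiso].
pose U : 'M[int]_(22, 2) := \matrix_(i, j) (if val j == 0%N then u1 i 0 else u2 i 0).
have cU0 : col 0 U = u1 by apply/colP => i; rewrite !mxE.
have cU1 : col 1 U = u2 by apply/colP => i; rewrite !mxE.
have LU a : L (U *m a).
  apply/hspan; exists (a 0 0), (a 1 0); apply/colP => i.
  rewrite !mxE big_ord_recr big_ord1 /= !mxE /=.
  rewrite (_ : widen_ord _ _ = 0); last by apply: val_inj.
  rewrite (_ : ord_max = 1); last by apply: val_inj.
  by rewrite mulrC (mulrC (u2 i 0)).
pose Pm := U^T *m gramN d.
have [Lm uL [Rm uR [dd sdd EP]]] := int_Smith_normal_form Pm.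
pose Dm : 'M[int]_(2, 22) := \matrix_(i, j) (dd`_i *+ (i == j :> nat)).
rewrite -/Dm in EP.
pose d0 := dd`_0.
have d01 : (d0 %| dd`_1)%Z := sorted_dvd01 sdd.
have dD i j : (d0 %| Dm i j)%Z.
  rewrite mxE; apply: rpredMn; case: i => [[|[|k]] hk] //=.
have dP z (i : 'I_2) : (d0 %| bN d (col i U) z)%Z.
  by rewrite -entry_bN -/Pm EP -!mulmxA; apply: dvd_mx_r; apply: dvd_mx_l.
case: (boolP (`|d0| == 1)%N) => hd.
  pose a : 'cV[int]_2 := (invmx Lm)^T *m delta_mx 0 0.
  pose w : vecN := invmx Rm *m delta_mx 0 0.
  have key : bN d (U *m a) w = d0.
    rewrite /bN.
    have -> : (U *m a)^T *m gramN d *m w =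
      (delta_mx 0 0)^T *m (invmx Lm *m Pm *m invmx Rm) *m delta_mx 0 0.
      by rewrite /a /w /Pm !trmx_mul trmxK !mulmxA.
    have -> : invmx Lm *m Pm *m invmx Rm = Dm.
      by rewrite EP -!mulmxA mulKmx // mulmxV // mulmx1.
    by rewrite trmx_delta -rowE -colE !mxE /= mulr1n.
  have dd1 : d0 * d0 = 1.
    by move: hd; case: (d0) => [[|[|n]]|[|n]] //.
  exists (U *m a), (d0 *: w); split => //.
  by rewrite /bN -scalemxAr mxE -/(bN d _ _) key.
pose p := if (`|d0| == 0)%N then 2%N else pdiv `|d0|.
have pp : prime p.
  rewrite /p; case: ifP => // h0; apply: pdiv_prime.
  by move: h0 hd; case: (`|d0|%N) => [|[|k]].
have pd0 : (p %| d0)%Z.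
  rewrite dvdzE /p; case: ifP => [/eqP ->|_]; [exact: dvdn0|exact: pdiv_dvd].
exfalso; apply: (@no_common_prime d L u1 u2 p) => // z.
  by apply: dvdz_trans pd0 _; rewrite -cU0.
by apply: dvdz_trans pd0 _; rewrite -cU1.
Qed.



Lemma gram_entry_bN d i j : gramN d i j = bN d (delta_mx i 0) (delta_mx j 0).
Proof. by rewrite /bN trmx_delta -rowE -colE !mxE. Qed.

Lemma bN_sym d x y : bN d x y = bN d y x.
Proof. by rewrite !bN_formula bformC. Qed.

Lemma symN d : (gramN d)^T = gramN d.
Proof.
apply/matrixP => i j; rewrite [LHS]mxE.
by rewrite !gram_entry_bN bN_sym.
Qed.

Lemma bN_bil d x y : bN d x y = bil (gramN d) x y.
Proof. by []. Qed.

Section Real.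
Variable R : realType.
Variable d : nat.

Lemma symR : (gramR R d)^T = gramR R d.
Proof. by rewrite /gramR map_trmx symN. Qed.

Lemma bil_map (x y : vecN) :
  bil (gramR R d) (map_mx intr x) (map_mx intr y) = (bN d x y)%:~R.
Proof. by rewrite /bil /gramR map_trmx -!map_mxM mxE. Qed.

Definition bz (i : nat) : vecN := \col_(k < 22) fz i k.

Lemma bN_bz i j : bN d (bz i) (bz j) = bform d (fz i) (fz j).
Proof. by rewrite bN_formula; apply: bform_ext => k hk; rewrite /bz xc_col. Qed.

Lemma fz21 i : (i < 22)%N -> fz i 21 = (i == 21)%:R.
Proof.
move=> hi; have := @allP _ (fun i => fz i 21 == (i == 21)%:R) (iota 0 22).
move/(_ _ i); rewrite mem_iota /= => h; apply/eqP; apply: h => //.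
Qed.


Lemma orth_bz i j : (i < 22)%N -> (j < 22)%N -> i != j -> bN d (bz i) (bz j) = 0.
Proof.
move=> hi hj nij; rewrite bN_bz bform_d fz21 // fz21 //.
have := orth_check => /allP /(_ i); rewrite mem_iota add0n leq0n hi => /(_ isT) /allP /(_ j).
rewrite mem_iota add0n leq0n hj (negbTE nij) orFb => /(_ isT) /eqP ->.
case: (eqVneq i 21%N) => [ei|ni].
  have nj : (j == 21%N) = false by apply/negbTE; rewrite -ei eq_sym.
  by rewrite nj mulr0 subr0.
by rewrite (_ : false%:R = 0 :> int) // mulr0 mul0r subr0.
Qed.

Lemma norm_bz i : (0 < d)%N -> (i < 22)%N -> bN d (bz i) (bz i) != 0.
Proof.
move=> d0 hi; rewrite bN_bz bform_d fz21 //.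
case: (ltnP i 21) => h21.
  have := norm_check => /allP /(_ i); rewrite mem_iota add0n leq0n h21 => /(_ isT). rewrite (_ : (i == 21) = false) ?mulr0 ?subr0 //.
  by apply/negbTE; rewrite neq_ltn h21.
have -> : i = 21%N by apply/eqP; rewrite eqn_leq h21 -ltnS hi.
have -> : bform 0 (fz 21) (fz 21) = 0 by vm_compute.
rewrite eqxx !mulr1 sub0r oppr_eq0 -[0 : int]/(Posz 0%N) eqz_nat muln_eq0 /=.
by rewrite -lt0n.
Qed.

Definition bR (i : 'I_22) : 'cV[R]_22 := map_mx intr (bz i).

Lemma spin_decomp (g : 'M[int]_22) : (0 < d)%N -> isom_N d g ->
  exists s : seq 'cV[R]_22, all (fun v => qR d v != 0) s /\
     map_mx intr g = \prod_(v <- s) reflR d v.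
Proof.
move=> d0 [_ ig].
have symG := symR.
have := @CD R 22 (gramR R d) symG bR _ _ (map_mx intr g).
apply.
- move=> i j nij; rewrite /bR bil_map orth_bz // ?intr_eq0 //.
- by move=> i; rewrite /bR bil_map intr_eq0 norm_bz.
- by rewrite /iso /gramR map_trmx -!map_mxM ig.
Qed.

End Real.

Definition hm d (x y : vecN) : 'M[int]_22 :=
  reflE (gramN d) 1 x *m reflE (gramN d) (-1) y.

Lemma h_construct d (L : vecN -> Prop) (u w : vecN) : prim_iso_rank2 d L -> L u ->
  bN d u w = 1 ->
  exists x y : vecN, [/\ bN d x x = 2, bN d y y = -2, bN d x y = 0 &
    forall z, L z -> L (hm d x y *m z) /\ hm d x y *m (hm d x y *m z) = z].
Proof.
case=> [[u1 [u2 [hind hspan]]] hprim hiso] Lu uw.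
have sG := symN d.
pose c := bhalf d (xc w).
have hc : bN d w w = 2 * c by rewrite bN_formula bform_even.
have uu : bN d u u = 0 by apply: hiso.
have wu : bN d w u = 1 by rewrite bN_sym.
pose w' := w - c *: u.
have uw' : bN d u w' = 1.
  by rewrite /w' !bN_bil (bilBr sG) (bilZr sG) -!bN_bil uw uu mulr0 subr0.
have w'w' : bN d w' w' = 0.
  rewrite /w' !bN_bil bilBl !(bilBr sG) !bilZl !(bilZr sG) -!bN_bil.
  rewrite uw wu uu hc; ring.
have w'u : bN d w' u = 1 by rewrite bN_sym.
clearbody w'.
exists (u + w'), (u - w'); split.
- by rewrite !bN_bil !bilDl !(bilDr sG) -!bN_bil uu uw' w'u w'w'.
- rewrite !bN_bil !bilBl !(bilBr sG) -!bN_bil uu uw' w'u w'w'.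
  by [].
- rewrite !bN_bil !bilDl !(bilBr sG) -!bN_bil uu uw' w'u w'w'.
  by rewrite subr0 sub0r addrN.
have hz z : L z -> hm d (u + w') (u - w') *m z = z - (2 * bN d w' z) *: u.
  move=> Lz; have uz : bN d u z = 0 by apply: hiso.
  rewrite /hm -mulmxA !reflE_apply.
  rewrite !bN_bil in uz *.
  do 3 rewrite ?(bilBr sG) ?(bilZr sG) ?bilDl ?bilBl ?bilZl ?(bilDr sG) ?bilNl ?(bilNr sG).
  rewrite ?uz -!bN_bil ?uu ?uw' ?w'u ?w'w'.
  set cz := bN d w' z; clearbody cz.
  apply/colP => i; rewrite !mxE; ring.
have Lh z : L z -> L (hm d (u + w') (u - w') *m z).
  move=> Lz; rewrite hz //.
  have [a [b ->]] := (hspan z).1 Lz.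
  have [al [be eu]] := (hspan u).1 Lu.
  apply/hspan; exists (a - 2 * bN d w' (a *: u1 + b *: u2) * al),
                      (b - 2 * bN d w' (a *: u1 + b *: u2) * be).
  rewrite [in LHS]eu; apply/colP => i; rewrite !mxE; ring.
move=> z Lz; split; first exact: Lh.
rewrite (hz _ (Lh _ Lz)) hz //.
have -> : bN d w' (z - (2 * bN d w' z) *: u) = - bN d w' z.
  by rewrite !bN_bil (bilBr sG) (bilZr sG) -!bN_bil w'u; ring.
apply/colP => i; rewrite !mxE; ring.
Qed.

Lemma isom_hm d x y : bN d x x = 2 -> bN d y y = -2 -> isom_N d (hm d x y).
Proof.
move=> hx hy; have sG := symN d.
have ex : 1 * bil (gramN d) x x = 2 by rewrite -bN_bil hx mul1r.
have ey : -1 * bil (gramN d) y y = 2 by rewrite -bN_bil hy mulN1r opprK.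
split.
  rewrite unitmx_mul; apply/andP; split.
    by case: (mulmx1_unit (reflE_inv ex)).
  by case: (mulmx1_unit (reflE_inv ey)).
by apply: iso_mul; apply: (reflE_iso sG).
Qed.

Lemma qR_map (R : realType) d x : qR d (map_mx intr x : 'cV[R]_22) = (bN d x x)%:~R.
Proof. exact: bil_map. Qed.

Lemma map_hm (R : realType) d x y : bN d x x = 2 -> bN d y y = -2 ->
  map_mx intr (hm d x y) = reflR d (map_mx intr x : 'cV[R]_22) *m reflR d (map_mx intr y).
Proof.
move=> hx hy.
rewrite /hm /reflE /reflR map_mxM !map_mxB map_mx1 !map_mxZ !map_mxM !map_trmx.
rewrite !qR_map hx hy rmorph1 rmorphN1 /gramR.
have -> : (2 / (-2)%:~R : R) = -1.
  by rewrite rmorphN /= invrN mulrN divff // pnatr_eq0.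
by rewrite (_ : (2%:~R : R) = 2) // divff // pnatr_eq0.
Qed.

Theorem mainTheorem19 (R : realType) (d : nat) :
  (0 < d)%N -> squarefree d ->
  forall L L' : vecN -> Prop,
    prim_iso_rank2 d L -> prim_iso_rank2 d L' ->
    ((exists g, isom_N d g /\ maps_to g L L') <->
     (exists g, isom_plus_N R d g /\ maps_to g L L')).
Proof.
move=> d0 _ L L' pL pL'; split; last first.
  by case=> g [[ig _] mg]; exists g.
case=> g [ig mg].
have [u [w [Lu uw]]] := exists_unimod pL'.
have [x [y [hx hy hxy hL]]] := h_construct pL' Lu uw.
have [s [hs1 hs2]] := @spin_decomp R d g d0 ig.
pose P := \prod_(v <- s) (- qR d v / 2).
have P0 : P != 0.
  rewrite /P prodf_seq_neq0; apply/allP => v vs /=.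
  rewrite mulf_eq0 oppr_eq0 invr_eq0 pnatr_eq0 orbF.
  by move/allP: hs1 => /(_ v vs).
case: (ltgtP P 0) => hP; last by rewrite hP eqxx in P0.
- exists (hm d x y *m g); split.
    split.
      case: ig => ug isg; case: (isom_hm hx hy) => uh ish; split.
        by rewrite unitmx_mul uh ug.
      exact: iso_mul.
    exists [:: map_mx intr x, map_mx intr y & s]; split.
    + by rewrite /= !qR_map hx hy hs1 !intr_eq0.
    + by rewrite !big_cons -hs2 map_mxM (map_hm R hx hy) -mulmxA.
    + rewrite !big_cons -/P !qR_map hx hy.
      have -> : (- (2%:~R : R) / 2) = -1 by rewrite mulNr divff // pnatr_eq0.
      have -> : (- ((-2)%:~R : R) / 2) = 1 by rewrite rmorphN opprK /= divff // pnatr_eq0.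
      by rewrite mul1r mulN1r oppr_gt0.
  move=> z; split.
    move=> Lz; have [Lhz hhz] := hL z Lz.
    have [v [Lv ev]] := (mg _).1 Lhz.
    by exists v; split => //; rewrite -mulmxA -ev hhz.
  move=> [v [Lv ->]]; rewrite -mulmxA.
  have Lgv : L' (g *m v) by apply/mg; exists v.
  exact: (hL _ Lgv).1.
- exists g; split => //; split => //.
  by exists s; split.
Qed.
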